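(* For any finite nonempty sets $X,Y,Z,W \subseteq \mathbb{Z}$, \[ |X+Y| \;\le\; \frac{|X+Z|\cdot|Z+W|\cdot|W+Y|}{|Z|\cdot|W|}. \]
   Context: For sets $P,Q\subseteq\mathbb{Z}$, $P+Q=\{p+q : p\in P,\ q\in Q\}$. *)

(* Defs.v *)
From HB Require Import structures.
From mathcomp Require Import all_boot all_order all_algebra.
From mathcomp Require Import finmap.
Set Implicit Arguments. Unset Strict Implicit. Unset Printing Implicit Defensive.
Import Order.TTheory GRing.Theory Num.Theory.
Local Open Scope fset_scope.

Definition sumset (P Q : {fset int}) : {fset int} :=
  [fset (p + q)%R | p in P, q in Q].

(* Main.v *)
Require Import Defs.
From HB Require Import structures.
From mathcomp Require Import all_boot all_order all_algebra.
From mathcomp Require Import finmap zify.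
Import Order.TTheory GRing.Theory Num.Theory.
Local Open Scope fset_scope.

Lemma sumsetP (P Q : {fset int}) s :
  reflect (exists p, (p \in P) && ((s - p)%R \in Q)) (s \in sumset P Q).
Proof.
apply: (iffP idP).
  by case/imfset2P => p pP [q qQ ->]; exists p; rewrite pP /= addrC addKr.
case=> p /andP[pP qQ]; apply/imfset2P; exists p => //; exists (s - p)%R => //.
by rewrite addrC subrK.
Qed.

Lemma sumset_in (P Q : {fset int}) p q : p \in P -> q \in Q -> (p + q)%R \in sumset P Q.
Proof. by move=> pP qQ; apply/imfset2P; exists p => //; exists q. Qed.

Lemma key_ineq (X Y Z W : {fset int}) :
  (#|` sumset X Y| * #|` Z| * #|` W| <=
   #|` sumset X Z| * #|` sumset Z W| * #|` sumset W Y|)%N.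
Proof.
have exS : forall s : sumset X Y, exists p, (p \in X) && ((val s - p)%R \in Y).
  by move=> s; apply/sumsetP; exact: valP.
pose xs (s : sumset X Y) := xchoose (exS s).
have xsP s : (xs s \in X) && ((val s - xs s)%R \in Y) := xchooseP (exS s).
have h1 (s : sumset X Y) (z : Z) : (xs s + val z)%R \in sumset X Z.
  by apply: sumset_in; [case/andP: (xsP s) | exact: valP].
have h2 (z : Z) (w : W) : (val z + val w)%R \in sumset Z W.
  by apply: sumset_in; exact: valP.
have h3 (s : sumset X Y) (w : W) : (val w + (val s - xs s))%R \in sumset W Y.
  by apply: sumset_in; [exact: valP | case/andP: (xsP s)].
pose g (t : (sumset X Y * Z * W)%type) : (sumset X Z * sumset Z W * sumset W Y)%type :=
  let: (s, z, w) := t in ([` h1 s z], [` h2 z w], [` h3 s w]).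
have ginj : injective g.
  move=> [[s z] w] [[s' z'] w'] /= [] e1 e2 e3.
  have es : val s = val s'.
    move: e1 e2 e3; move: (xs s) (xs s') (fsval z) (fsval z') (fsval w) (fsval w') => a a' b b' c c'.
    rewrite /= => e1 e2 e3; lia.
  have ess : s = s' by apply: val_inj.
  subst s'.
  have ez : z = z' by apply: val_inj; exact: (addrI _ e1).
  subst z'.
  by congr (_,_,_); apply: val_inj; exact: (addrI _ e2).
have := leq_card g ginj.
by rewrite !card_prod -!cardfE.
Qed.

Theorem mainTheorem1 (X Y Z W : {fset int}) :
  X != fset0 -> Y != fset0 -> Z != fset0 -> W != fset0 ->
  ((#|` sumset X Y|)%:R <=
     ((#|` sumset X Z|)%:R * (#|` sumset Z W|)%:R * (#|` sumset W Y|)%:R)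
     / ((#|` Z|)%:R * (#|` W|)%:R) :> rat)%R.
Proof.
move=> _ _ Z0 W0.
have zp : (0 < #|` Z|)%N by rewrite lt0n cardfs_eq0.
have wp : (0 < #|` W|)%N by rewrite lt0n cardfs_eq0.
rewrite ler_pdivlMr; last by rewrite -natrM ltr0n muln_gt0 zp wp.
rewrite -!natrM ler_nat mulnA; exact: key_ineq.
Qed.
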